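(* For every real $\alpha\ge1$ and every integer $n\ge1$, $$\sum_{k=1}^n(\alpha n)^{-\frac{k}{k+1}}\ \le\ \frac{1+e^{2/e}}{\sqrt\alpha}.$$ *)

(* Defs.v *)
From Stdlib Require Import Reals.

(* Main.v *)
Require Import Defs.
From Stdlib Require Import Reals Lra Lia Psatz.
Open Scope R_scope.
Ltac nz := repeat split; apply Rgt_not_eq; lra.

Lemma bern (x : R) (j : nat) : 0 <= x -> 1 + INR j * (x - 1) <= x ^ j.
Proof.
  intros Hx; induction j as [|j IH].
  - simpl; lra.
  - rewrite S_INR; simpl.
    assert (H0 : 0 <= INR j) by apply pos_INR.
    assert (H1 : x * (1 + INR j * (x - 1)) <= x * x ^ j) by (apply Rmult_le_compat_l; lra).
    assert (0 <= INR j * ((x-1)*(x-1))) by (apply Rmult_le_pos; [lra| apply Rle_0_sqr]). nra.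
Qed.

Lemma key (N : R) (j : nat) : 1 <= N -> (2 <= j)%nat -> Rpower N (/ INR j) <= N / 2 ^ j + 2.
Proof.
  intros HN Hj.
  set (y := Rpower N (/ INR j)).
  assert (Hy : 0 < y) by (unfold y, Rpower; apply exp_pos).
  assert (HjR : 2 <= INR j) by (replace 2 with (INR 2) by (simpl; lra); apply le_INR; lia).
  assert (Hyj : y ^ j = N).
  { unfold y. rewrite <- Rpower_pow by (unfold Rpower; apply exp_pos).
    rewrite Rpower_mult, Rinv_l by nz. apply Rpower_1; lra. }
  set (x := y / 2).
  assert (Hx : y = 2 * x) by (unfold x; field).
  assert (HN2 : N = 2 ^ j * x ^ j) by (rewrite <- Hyj, Hx; apply Rpow_mult_distr).
  assert (H2j : 0 < 2 ^ j) by (apply pow_lt; lra).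
  assert (Hgoal : 2 * x <= x ^ j + 2).
  { destruct (Rle_lt_dec 1 x) as [H|H].
    - pose proof (bern x j ltac:(lra)). nra.
    - assert (0 <= x ^ j) by (apply pow_le; unfold x; lra). lra. }
  rewrite Hx, HN2. replace (2 ^ j * x ^ j / 2 ^ j) with (x ^ j) by (field; nz). lra.
Qed.

Lemma term (N : R) (i : nat) : 1 <= N ->
  Rpower N (- (INR (S i) / INR (S (S i)))) <= (1/2) ^ (S (S i)) + 2 / N.
Proof.
  intros HN.
  assert (Hp : 0 < INR (S (S i))) by (apply lt_0_INR; lia).
  replace (- (INR (S i) / INR (S (S i)))) with (/ INR (S (S i)) + Ropp 1)
    by (rewrite (S_INR (S i)) in Hp |- *; field; nz).
  rewrite Rpower_plus, (Rpower_Ropp N 1), Rpower_1 by lra.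
  pose proof (key N (S (S i)) HN ltac:(lia)) as K.
  assert (0 < 2 ^ S (S i)) by (apply pow_lt; lra).
  replace ((1/2) ^ S (S i)) with (/ 2 ^ S (S i)) by (unfold Rdiv; rewrite Rmult_1_l, pow_inv; reflexivity).
  apply Rmult_le_compat_r with (r := / N) in K; [|apply Rlt_le, Rinv_0_lt_compat; lra].
  replace ((N / 2 ^ S (S i) + 2) * / N) with (/ 2 ^ S (S i) + 2 / N) in K by (field; nz).
  exact K.
Qed.

Lemma geom (m : nat) : sum_f_R0 (fun i => (1/2) ^ (S (S i))) m = 1/2 - (1/2) ^ (S (S m)).
Proof.
  induction m as [|m IH].
  - simpl; lra.
  - rewrite tech5, IH. replace (S (S (S m))) with (S (S m) + 1)%nat by lia.
    rewrite pow_add. simpl. lra.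
Qed.

Theorem mainTheorem4 (alpha : R) (n : nat) (Halpha : 1 <= alpha) (Hn : (1 <= n)%nat) :
  sum_f_R0 (fun i => Rpower (alpha * INR n) (- (INR (S i) / INR (S (S i))))) (n - 1)
  <= (1 + exp (2 / exp 1)) / sqrt alpha.
Proof.
  assert (HnR : 1 <= INR n) by (replace 1 with (INR 1) by reflexivity; apply le_INR; lia).
  assert (Hs : 0 < sqrt alpha) by (apply sqrt_lt_R0; lra).
  set (c := / sqrt alpha).
  assert (Hc : 0 < c) by (apply Rinv_0_lt_compat; lra).
  apply Rle_trans with
    (sum_f_R0 (fun i => (1/2) ^ (S (S i)) * c + (2 / INR n) * c) (n - 1)).
  { apply sum_Rle. intros i _.
    rewrite <- Rpower_mult_distr by lra.
    assert (Ha : Rpower alpha (- (INR (S i) / INR (S (S i)))) <= c).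
    { unfold c. rewrite <- Rpower_sqrt by lra. rewrite <- Rpower_Ropp.
      apply Rle_Rpower; auto.
      assert (Hp : 0 < INR (S i)) by (apply lt_0_INR; lia).
      rewrite (S_INR (S i)).
      apply Ropp_le_contravar.
      assert (E : INR (S i) / (INR (S i) + 1) = 1 - / (INR (S i)+1)) by (field; nz).
      assert (1 <= INR (S i)) by (replace 1 with (INR 1) by reflexivity; apply le_INR; lia).
      assert (/ (INR (S i) + 1) <= / 2) by (apply Rinv_le_contravar; lra).
      rewrite E. lra. }
    pose proof (term (INR n) i HnR) as T.
    assert (0 <= Rpower alpha (- (INR (S i) / INR (S (S i))))) by (unfold Rpower; left; apply exp_pos).
    assert (0 <= Rpower (INR n) (- (INR (S i) / INR (S (S i))))) by (unfold Rpower; left; apply exp_pos).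
    rewrite <- Rmult_plus_distr_r, Rmult_comm.
    apply Rmult_le_compat; auto. }
  rewrite sum_plus, <- scal_sum, <- scal_sum, geom, sum_cte.
  replace (S (n - 1)) with n by lia.
  replace (2 / INR n * INR n) with 2 by (field; nz).
  replace ((1 + exp (2 / exp 1)) / sqrt alpha) with ((1 + exp (2 / exp 1)) * c) by reflexivity.
  assert (Hp : 0 <= (1 / 2) ^ S n) by (apply pow_le; lra).
  assert (He : 3 / 2 <= exp (2 / exp 1)).
  { pose proof exp_le_3. assert (0 < exp 1) by apply exp_pos.
    assert (2/3 <= 2 / exp 1) by (unfold Rdiv; apply Rmult_le_compat_l; [lra|]; apply Rinv_le_contravar; lra).
    pose proof (exp_ineq1 (2 / exp 1) ltac:(nz)). lra. }
  assert (0 <= c * (1 / 2) ^ S n) by (apply Rmult_le_pos; lra).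
  nra.
Qed.
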